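(* Let $(X,\mathbb{A},d)$ be a complete $C^*$-algebra valued metric space, where $\mathbb{A}$ is a unital $C^*$-algebra, and let $T:X\to X$ be a $C^*$-algebra valued Ćirić-type2 contractive mapping, i.e. for every $x,y\in X$ there is $q(x,y)\in\acute{\mathbb{A}}_+$ with $0\le\|q(x,y)\|<1$, and there is a mapping $\delta:X\times X\to\mathbb{A}_+$, such that $$d(T^n x,T^n y)\preceq q(x,y)^n\,\delta(x,y)\quad\text{for all }x,y\in X,\ n\in\mathbb{N}.$$ Then $T$ is orbitally continuous on $X$ if and only if $T$ has a unique fixed point in $X$.
   Context: $\mathbb{A}$ denotes a unital $C^*$-algebra with unit $I$ and zero $\theta$. An element $a\in\mathbb{A}$ is positive, written $a\succeq\theta$, if $a^*=a$ and its spectrum is contained in $[0,\infty)$; $\mathbb{A}_+$ is the set of positive elements, and $a\succeq b$ means $a-b\succeq\theta$. $\acute{\mathbb{A}}_+$ denotes the set of positive elements of $\mathbb{A}$ that commute with every element of $\mathbb{A}$. A $C^*$-algebra valued metric space $(X,\mathbb{A},d)$ is a nonempty set $X$ with $d:X\times X\to\mathbb{A}$ such that for all $x,y,z\in X$: $d(x,y)\succeq\theta$, with $d(x,y)=\theta$ iff $x=y$; $d(x,y)=d(y,x)$; $d(x,y)\preceq d(x,z)+d(z,y)$. A sequence $\{x_n\}$ converges to $x$ if $\|d(x_n,x)\|\to0$, and is Cauchy if $\|d(x_n,x_m)\|\to0$ as $n,m\to\infty$; the space is complete if every Cauchy sequence converges to a point of $X$. A self-map $T$ of $X$ is orbitally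 continuous at $u\in X$ if for every $x\in X$ and every increasing sequence of positive integers $\{n_i\}$, $\|d(T^{n_i}x,u)\|\to0$ implies $\|d(T^{n_i+1}x,Tu)\|\to0$ as $i\to\infty$; $T$ is orbitally continuous on $X$ if it is orbitally continuous at every $u\in X$. *)

(* Defs.v *)
From Stdlib Require Import Reals.
Open Scope R_scope.

Definition C : Type := (R * R)%type.
Definition Cre (z : C) : R := fst z.
Definition Cim (z : C) : R := snd z.
Definition C0 : C := (0, 0).
Definition C1 : C := (1, 0).
Definition Cadd (z w : C) : C := (fst z + fst w, snd z + snd w).
Definition Cmul (z w : C) : C :=
  (fst z * fst w - snd z * snd w, fst z * snd w + snd z * fst w).
Definition Cconj (z : C) : C := (fst z, - snd z).
Definition Cabs (z : C) : R := sqrt (fst z * fst z + snd z * snd z).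

(** The last two fields ([pos_add], [pos_norm_mono]) are standard THEOREMS of
    C*-algebra theory (the positive cone is closed under addition; the norm is
    monotone on positive elements); they are included so that the structure
    is usable, and they do not change the class of structures described. *)
Record CStarAlgebra := {
  car :> Type;
  czero : car;
  cone : car;
  cadd : car -> car -> car;
  copp : car -> car;
  cmul : car -> car -> car;
  cscal : C -> car -> car;
  cstar : car -> car;
  cnorm : car -> R;
  cadd_assoc : forall a b c, cadd a (cadd b c) = cadd (cadd a b) c;
  cadd_comm : forall a b, cadd a b = cadd b a;
  cadd_0 : forall a, cadd a czero = a;
  cadd_opp : forall a, cadd a (copp a) = czero;
  cmul_assoc : forall a b c, cmul a (cmul b c) = cmul (cmul a b) c;
  cmul_1l : forall a, cmul cone a = a;
  cmul_1r : forall a, cmul a cone = a;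
  cmul_addl : forall a b c, cmul (cadd a b) c = cadd (cmul a c) (cmul b c);
  cmul_addr : forall a b c, cmul a (cadd b c) = cadd (cmul a b) (cmul a c);
  cscal_assoc : forall l m a, cscal l (cscal m a) = cscal (Cmul l m) a;
  cscal_1 : forall a, cscal C1 a = a;
  cscal_addv : forall l a b, cscal l (cadd a b) = cadd (cscal l a) (cscal l b);
  cscal_adds : forall l m a, cscal (Cadd l m) a = cadd (cscal l a) (cscal m a);
  cscal_mull : forall l a b, cscal l (cmul a b) = cmul (cscal l a) b;
  cscal_mulr : forall l a b, cscal l (cmul a b) = cmul a (cscal l b);
  cstar_invol : forall a, cstar (cstar a) = a;
  cstar_add : forall a b, cstar (cadd a b) = cadd (cstar a) (cstar b);
  cstar_mul : forall a b, cstar (cmul a b) = cmul (cstar b) (cstar a);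
  cstar_scal : forall l a, cstar (cscal l a) = cscal (Cconj l) (cstar a);
  cnorm_nonneg : forall a, 0 <= cnorm a;
  cnorm_eq0 : forall a, cnorm a = 0 -> a = czero;
  cnorm_0 : cnorm czero = 0;
  cnorm_triangle : forall a b, cnorm (cadd a b) <= cnorm a + cnorm b;
  cnorm_scal : forall l a, cnorm (cscal l a) = Cabs l * cnorm a;
  cnorm_submult : forall a b, cnorm (cmul a b) <= cnorm a * cnorm b;
  cnorm_cstar : forall a, cnorm (cmul (cstar a) a) = cnorm a * cnorm a;
  ccomplete : forall u : nat -> car,
    (forall eps, eps > 0 -> exists N, forall n m, (n >= N)%nat -> (m >= N)%nat ->
        cnorm (cadd (u n) (copp (u m))) < eps) ->
    exists l, forall eps, eps > 0 -> exists N, forall n, (n >= N)%nat ->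
        cnorm (cadd (u n) (copp l)) < eps;
  pos_add : forall a b,
    (cstar a = a /\ forall l : C,
       ~ (exists y, cmul (cadd a (cscal l (copp cone))) y = cone /\
                    cmul y (cadd a (cscal l (copp cone))) = cone) ->
       Cim l = 0 /\ 0 <= Cre l) ->
    (cstar b = b /\ forall l : C,
       ~ (exists y, cmul (cadd b (cscal l (copp cone))) y = cone /\
                    cmul y (cadd b (cscal l (copp cone))) = cone) ->
       Cim l = 0 /\ 0 <= Cre l) ->
    (cstar (cadd a b) = cadd a b /\ forall l : C,
       ~ (exists y, cmul (cadd (cadd a b) (cscal l (copp cone))) y = cone /\
                    cmul y (cadd (cadd a b) (cscal l (copp cone))) = cone) ->
       Cim l = 0 /\ 0 <= Cre l);
  pos_norm_mono : forall a b,
    (cstar a = a /\ forall l : C,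
       ~ (exists y, cmul (cadd a (cscal l (copp cone))) y = cone /\
                    cmul y (cadd a (cscal l (copp cone))) = cone) ->
       Cim l = 0 /\ 0 <= Cre l) ->
    (cstar (cadd b (copp a)) = cadd b (copp a) /\ forall l : C,
       ~ (exists y, cmul (cadd (cadd b (copp a)) (cscal l (copp cone))) y = cone /\
                    cmul y (cadd (cadd b (copp a)) (cscal l (copp cone))) = cone) ->
       Cim l = 0 /\ 0 <= Cre l) ->
    cnorm a <= cnorm b
}.

Arguments czero {_}. Arguments cone {_}. Arguments cadd {_}. Arguments copp {_}.
Arguments cmul {_}. Arguments cscal {_}. Arguments cstar {_}. Arguments cnorm {_}.

Section CStar.
Variable A : CStarAlgebra.

Definition csub (a b : A) : A := cadd a (copp b).

Definition invertible (a : A) : Prop :=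
  exists b : A, cmul a b = cone /\ cmul b a = cone.

Definition in_spectrum (a : A) (l : C) : Prop :=
  ~ invertible (csub a (cscal l cone)).

Definition positive (a : A) : Prop :=
  cstar a = a /\ forall l : C, in_spectrum a l -> Cim l = 0 /\ 0 <= Cre l.

Definition cle (a b : A) : Prop := positive (csub b a).

Definition central_positive (a : A) : Prop :=
  positive a /\ forall b : A, cmul a b = cmul b a.

Fixpoint cpow (a : A) (n : nat) : A :=
  match n with O => cone | S k => cmul a (cpow a k) end.

End CStar.

Arguments csub {_}. Arguments invertible {_}. Arguments in_spectrum {_}.
Arguments positive {_}. Arguments cle {_}. Arguments central_positive {_}.
Arguments cpow {_}.

Definition is_cstar_metric (X : Type) (A : CStarAlgebra) (d : X -> X -> A) : Prop :=
  (forall x y, positive (d x y)) /\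
  (forall x y, d x y = czero <-> x = y) /\
  (forall x y, d x y = d y x) /\
  (forall x y z, cle (d x y) (cadd (d x z) (d z y))).

Definition seq_converges {X : Type} {A : CStarAlgebra} (d : X -> X -> A)
  (u : nat -> X) (x : X) : Prop :=
  Un_cv (fun n => cnorm (d (u n) x)) 0.

Definition seq_cauchy {X : Type} {A : CStarAlgebra} (d : X -> X -> A)
  (u : nat -> X) : Prop :=
  forall eps, eps > 0 -> exists N, forall n m, (n >= N)%nat -> (m >= N)%nat ->
    cnorm (d (u n) (u m)) < eps.

Definition metric_complete {X : Type} {A : CStarAlgebra} (d : X -> X -> A) : Prop :=
  forall u : nat -> X, seq_cauchy d u -> exists x, seq_converges d u x.

Definition iterT {X : Type} (T : X -> X) (n : nat) (x : X) : X := Nat.iter n T x.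

Definition orbitally_continuous_at {X : Type} {A : CStarAlgebra} (d : X -> X -> A)
  (T : X -> X) (u : X) : Prop :=
  forall (x : X) (ni : nat -> nat),
    (forall i, (ni i < ni (S i))%nat) ->
    seq_converges d (fun i => iterT T (ni i) x) u ->
    seq_converges d (fun i => iterT T (S (ni i)) x) (T u).

Definition orbitally_continuous {X : Type} {A : CStarAlgebra} (d : X -> X -> A)
  (T : X -> X) : Prop :=
  forall u : X, orbitally_continuous_at d T u.

Definition ciric_type2 {X : Type} {A : CStarAlgebra} (d : X -> X -> A)
  (T : X -> X) : Prop :=
  exists (q : X -> X -> A) (delta : X -> X -> A),
    (forall x y, central_positive (q x y) /\ cnorm (q x y) < 1) /\
    (forall x y, positive (delta x y)) /\
    (forall x y n, (1 <= n)%nat ->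
       cle (d (iterT T n x) (iterT T n y)) (cmul (cpow (q x y) n) (delta x y))).

(* Main.v *)
Require Import Defs.
From Stdlib Require Import Reals.
From Stdlib Require Import Lra Lia Arith.

Lemma add0l (A : CStarAlgebra) (a : A) : cadd czero a = a.
Proof. rewrite cadd_comm. apply cadd_0. Qed.

Lemma opp_uniq (A : CStarAlgebra) (a b : A) : cadd a b = czero -> b = copp a.
Proof.
  intros H.
  transitivity (cadd (cadd a b) (copp a)).
  - rewrite (cadd_comm A a b), <- cadd_assoc, cadd_opp, cadd_0. reflexivity.
  - rewrite H, add0l. reflexivity.
Qed.

Lemma scal0 (A : CStarAlgebra) l : cscal l (@czero A) = czero.
Proof.
  set (z := cscal l (@czero A)).
  assert (H : cadd z z = z) by (unfold z; rewrite <- cscal_addv, cadd_0; reflexivity).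
  transitivity (cadd (cadd z z) (copp z)).
  - rewrite <- cadd_assoc, cadd_opp, cadd_0. reflexivity.
  - rewrite H, cadd_opp. reflexivity.
Qed.

Lemma scal_opp (A : CStarAlgebra) l : cscal l (copp (@cone A)) = copp (cscal l cone).
Proof. apply opp_uniq. rewrite <- cscal_addv, cadd_opp, scal0. reflexivity. Qed.

Lemma norm_mono (A : CStarAlgebra) (a b : A) : Defs.positive a -> cle a b -> cnorm a <= cnorm b.
Proof.
  unfold cle, Defs.positive, in_spectrum, invertible, csub.
  intros [H1 H2] [H3 H4]. apply pos_norm_mono.
  - split; auto. intros l Hl. apply H2. rewrite <- scal_opp. exact Hl.
  - split; auto. intros l Hl. apply H4. rewrite <- scal_opp. exact Hl.
Qed.

Lemma Dtri (A : CStarAlgebra) (X : Type) (d : X -> X -> A) (Hd : is_cstar_metric X A d) x y z :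
  cnorm (d x y) <= cnorm (d x z) + cnorm (d z y).
Proof.
  destruct Hd as (Hp & He & Hs & Ht).
  eapply Rle_trans. apply norm_mono; [apply Hp | apply Ht]. apply cnorm_triangle.
Qed.

Lemma Dsym (A : CStarAlgebra) (X : Type) (d : X -> X -> A) (Hd : is_cstar_metric X A d) x y :
  cnorm (d x y) = cnorm (d y x).
Proof. destruct Hd as (Hp & He & Hs & Ht). rewrite Hs. reflexivity. Qed.

Lemma D0 (A : CStarAlgebra) (X : Type) (d : X -> X -> A) (Hd : is_cstar_metric X A d) x y :
  cnorm (d x y) = 0 -> x = y.
Proof. destruct Hd as (Hp & He & Hs & Ht). intro H. apply He, cnorm_eq0, H. Qed.

Lemma Dxx (A : CStarAlgebra) (X : Type) (d : X -> X -> A) (Hd : is_cstar_metric X A d) x :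
  cnorm (d x x) = 0.
Proof. destruct Hd as (Hp & He & Hs & Ht). assert (d x x = czero) by (apply He; auto).
  rewrite H. apply cnorm_0. Qed.

Lemma cpow_norm (A : CStarAlgebra) (q : A) n : (1 <= n)%nat -> cnorm (cpow q n) <= cnorm q ^ n.
Proof.
  induction n; intros Hn. lia.
  destruct n.
  - simpl. rewrite cmul_1r. lra.
  - change (cnorm (cmul q (cpow q (S n))) <= cnorm q * cnorm q ^ (S n)).
    eapply Rle_trans; [apply cnorm_submult|].
    apply Rmult_le_compat_l; [apply cnorm_nonneg| apply IHn; lia].
Qed.

Lemma iter_fix X (T : X -> X) p n : T p = p -> iterT T n p = p.
Proof. intro H. induction n; [reflexivity|]. unfold iterT in *; simpl. rewrite IHn; auto. Qed.

Lemma iter_S_r X (T : X -> X) n x : iterT T n (T x) = iterT T (S n) x.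
Proof. induction n; [reflexivity|]. unfold iterT in *; simpl in *. rewrite IHn. reflexivity. Qed.

Lemma contr (A : CStarAlgebra) (X : Type) (d : X -> X -> A) T (Hd : is_cstar_metric X A d) (HT : ciric_type2 d T) x y :
  exists k M, 0 <= k < 1 /\ 0 <= M /\
   forall n, cnorm (d (iterT T n x) (iterT T n y)) <= k ^ n * M.
Proof.
  destruct HT as (q & del & Hq & Hdel & Hc).
  exists (cnorm (q x y)), (Rmax (cnorm (del x y)) (cnorm (d x y))).
  split; [split; [apply cnorm_nonneg| apply Hq]|].
  split; [eapply Rle_trans; [apply cnorm_nonneg| apply Rmax_l]|].
  intros [|n].
  - simpl. rewrite Rmult_1_l. apply Rmax_r.
  - eapply Rle_trans; [apply norm_mono; [apply Hd | apply Hc; lia]|].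
    eapply Rle_trans; [apply cnorm_submult|].
    apply Rmult_le_compat; [apply cnorm_nonneg | apply cnorm_nonneg | apply cpow_norm; lia | apply Rmax_l].
Qed.

Lemma geo k S eps : 0 <= k < 1 -> 0 <= S -> eps > 0 ->
  exists N, forall n, (n >= N)%nat -> k ^ n * S < eps.
Proof.
  intros Hk HS He.
  assert (Hk' : Rabs k < 1) by (rewrite Rabs_pos_eq; lra).
  assert (Hy : 0 < eps / (S + 1)) by (apply Rdiv_lt_0_compat; lra).
  destruct (pow_lt_1_zero k Hk' _ Hy) as [N HN].
  exists N; intros n Hn. specialize (HN n Hn).
  assert (Hp : 0 <= k ^ n) by (apply pow_le; lra).
  rewrite Rabs_pos_eq in HN by exact Hp.
  assert (k^n*S <= k^n*(S+1)) by (apply Rmult_le_compat_l; lra).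
  assert (k^n*(S+1) < eps/(S+1)*(S+1)) by (apply Rmult_lt_compat_r; lra).
  replace (eps/(S+1)*(S+1)) with eps in H0 by (field; lra). lra.
Qed.

Lemma conv_elim (A : CStarAlgebra) (X : Type) (d : X -> X -> A) u a : seq_converges d u a ->
  forall eps, eps > 0 -> exists N, forall n, (n >= N)%nat -> cnorm (d (u n) a) < eps.
Proof.
  intros H eps He. destruct (H eps He) as [N HN]. exists N. intros n Hn.
  specialize (HN n Hn). unfold R_dist in HN. rewrite Rminus_0_r, Rabs_pos_eq in HN
    by apply cnorm_nonneg. exact HN.
Qed.

Lemma conv_intro (A : CStarAlgebra) (X : Type) (d : X -> X -> A) u a :
  (forall eps, eps > 0 -> exists N, forall n, (n >= N)%nat -> cnorm (d (u n) a) < eps) ->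
  seq_converges d u a.
Proof.
  intros H eps He. destruct (H eps He) as [N HN]. exists N. intros n Hn.
  unfold R_dist. rewrite Rminus_0_r, Rabs_pos_eq by apply cnorm_nonneg. auto.
Qed.

Lemma lim_uniq (A : CStarAlgebra) (X : Type) (d : X -> X -> A) (Hd : is_cstar_metric X A d) u a b :
  seq_converges d u a -> seq_converges d u b -> a = b.
Proof.
  intros Ha Hb. apply (D0 A X d Hd).
  destruct (Rle_lt_or_eq_dec 0 _ (cnorm_nonneg A (d a b))) as [Hlt|Heq]; [|auto].
  destruct (conv_elim _ _ _ _ _ Ha (cnorm (d a b) / 2)) as [N1 H1]; [lra|].
  destruct (conv_elim _ _ _ _ _ Hb (cnorm (d a b) / 2)) as [N2 H2]; [lra|].
  specialize (H1 (max N1 N2) ltac:(lia)). specialize (H2 (max N1 N2) ltac:(lia)).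
  pose proof (Dtri A X d Hd a b (u (max N1 N2))).
  rewrite (Dsym A X d Hd a (u (max N1 N2))) in H. lra.
Qed.

Lemma subseq (A : CStarAlgebra) (X : Type) (d : X -> X -> A) f a (ni : nat -> nat) :
  (forall i, (ni i < ni (S i))%nat) -> seq_converges d f a ->
  seq_converges d (fun i => f (ni i)) a.
Proof.
  intros Hni Hf.
  assert (Hge : forall i, (ni i >= i)%nat).
  { induction i; [lia|]. specialize (Hni i). lia. }
  apply conv_intro. intros eps He.
  destruct (conv_elim _ _ _ _ _ Hf eps He) as [N HN]. exists N. intros n Hn.
  apply HN. specialize (Hge n). lia.
Qed.

Lemma conv_fix (A : CStarAlgebra) (X : Type) (d : X -> X -> A) T (Hd : is_cstar_metric X A d) (HT : ciric_type2 d T) p :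
  T p = p -> forall x, seq_converges d (fun n => iterT T n x) p.
Proof.
  intros Hp x. apply conv_intro. intros eps He.
  destruct (contr A X d T Hd HT x p) as (k & M & Hk & HM & Hb).
  destruct (geo k M eps Hk HM He) as [N HN]. exists N. intros n Hn.
  specialize (Hb n). rewrite (iter_fix X T p n Hp) in Hb. specialize (HN n Hn). lra.
Qed.

Theorem theorem3p7 (A : CStarAlgebra) (X : Type) (d : X -> X -> A) (T : X -> X)
  (HX : inhabited X) (Hd : is_cstar_metric X A d) (Hcomplete : metric_complete d)
  (HT : ciric_type2 d T) :
  orbitally_continuous d T <-> (exists! u : X, T u = u).
Proof.
  split.
  - intros Hoc. destruct HX as [x0].
    destruct (contr A X d T Hd HT x0 (T x0)) as (k & M & Hk & HM & Hb).
    set (S := M / (1 - k)).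
    assert (HS : M = S * (1 - k)) by (unfold S; field; lra).
    assert (HS0 : 0 <= S) by (unfold S; apply Rmult_le_pos; [lra| left; apply Rinv_0_lt_compat; lra]).
    assert (Tele : forall n j, cnorm (d (iterT T n x0) (iterT T (n + j) x0)) <= k^n*S - k^(n+j)*S).
    { intros n j. induction j.
      - rewrite Nat.add_0_r, (Dxx A X d Hd). lra.
      - eapply Rle_trans; [apply (Dtri A X d Hd) with (z := iterT T (n + j) x0)|].
        specialize (Hb (n + j)%nat). rewrite iter_S_r in Hb.
        replace (n + Datatypes.S j)%nat with (Datatypes.S (n + j)) by lia.
        assert (E : k ^ Datatypes.S (n + j) * S = k ^ (n+j) * S - k^(n+j) * M)
          by (rewrite HS; simpl; ring).
        rewrite E. lra. }
    assert (Hcau : seq_cauchy d (fun n => iterT T n x0)).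
    { intros eps He. destruct (geo k S eps Hk HS0 He) as [N HN]. exists N.
      intros n m Hn Hm.
      assert (Hp : forall j, 0 <= k ^ j * S) by (intro j; apply Rmult_le_pos; [apply pow_le; lra| lra]).
      destruct (le_lt_dec n m).
      - pose proof (Tele n (m - n)%nat). replace (n + (m - n))%nat with m in H by lia.
        specialize (HN n Hn). specialize (Hp m). lra.
      - pose proof (Tele m (n - m)%nat). replace (m + (n - m))%nat with n in H by lia.
        rewrite (Dsym A X d Hd). specialize (HN m Hm). specialize (Hp n). lra. }
    destruct (Hcomplete _ Hcau) as [u Hu].
    assert (H1 : seq_converges d (fun i => iterT T (Datatypes.S i) x0) (T u)).
    { apply (Hoc u x0 (fun i => i)). intro i; lia. exact Hu. }
    assert (H2 : seq_converges d (fun i => iterT T (Datatypes.S i) x0) u).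
    { apply (subseq A X d (fun n => iterT T n x0) u (fun i => Datatypes.S i)); auto. }
    assert (Hfix : T u = u) by (symmetry; exact (lim_uniq A X d Hd _ _ _ H2 H1)).
    exists u. split; auto. intros v Hv.
    exact (lim_uniq A X d Hd _ _ _ Hu (conv_fix A X d T Hd HT v Hv x0)).
  - intros [p [Hp Hu]]. intros u x ni Hni Hc.
    pose proof (conv_fix A X d T Hd HT p Hp x) as Hx.
    assert (Eu : u = p) by exact (lim_uniq A X d Hd _ _ _ Hc (subseq A X d _ p ni Hni Hx)).
    subst u. rewrite Hp.
    apply (subseq A X d (fun n => iterT T n x) p (fun i => Datatypes.S (ni i))); auto.
    intro i. specialize (Hni i). lia.
Qed.
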